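(* Let $S=\{x_1,\dots,x_N\}\subset\mathbb{R}^n$ be a two-distance tight frame for $\mathbb{R}^n$ with inner products $a,b$, $a^2\neq b^2$. Let $\Gamma_1$ be the graph on vertex set $\{1,\dots,N\}$ in which distinct $i,j$ are adjacent iff $\langle x_i,x_j\rangle=a$, and $\Gamma_2$ its complement (adjacency iff $\langle x_i,x_j\rangle=b$). Then $\Gamma_1$ and $\Gamma_2$ are strongly regular graphs: they are regular, any two adjacent vertices have the same number of common neighbours, and any two nonadjacent vertices have the same number of common neighbours.
   Context: A two-distance tight frame for $\mathbb{R}^n$ is a finite set of unit vectors $\{x_1,\dots,x_N\}\subset\mathbb{R}^n$ such that there are two real numbers $a\neq b$ with $\langle x_i,x_j\rangle\in\{a,b\}$ for all $i\neq j$, and $\sum_{i=1}^N\langle x,x_i\rangle^2=\frac{N}{n}\|x\|^2$ for all $x\in\mathbb{R}^n$. *)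

(* Defs.v *)
(* Vectors of R^n are row vectors 'rV[R]_n over an arbitrary
   real field R (the statement is purely algebraic; R = reals is an instance). *)
From HB Require Import structures.
From mathcomp Require Import all_boot all_order all_algebra.
Set Implicit Arguments. Unset Strict Implicit. Unset Printing Implicit Defensive.
Import Order.TTheory GRing.Theory Num.Theory.
Local Open Scope ring_scope.

Definition dotv (R : ringType) (n : nat) (u v : 'rV[R]_n) : R := (u *m v^T) 0 0.

Definition two_distance_tight_frame (R : realFieldType) (n N : nat)
    (x : 'I_N -> 'rV[R]_n) (a b : R) : Prop :=
  [/\ injective x,
      (forall i, dotv (x i) (x i) = 1),
      a != b,
      (forall i j, i != j -> dotv (x i) (x j) = a \/ dotv (x i) (x j) = b)
    & (forall v : 'rV[R]_n,
         \sum_(i < N) (dotv v (x i)) ^+ 2 = (N%:R / n%:R) * dotv v v)].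

Definition ip_graph (R : ringType) (n N : nat) (x : 'I_N -> 'rV[R]_n) (c : R)
  : rel 'I_N := fun i j => (i != j) && (dotv (x i) (x j) == c).

(* strongly regular graph (simple graph given by a symmetric irreflexive relation) *)
Definition strongly_regular (T : finType) (e : rel T) : Prop :=
  [/\ exists k : nat, forall i, #|[set j | e i j]| = k,
      exists l : nat, forall i j, i != j -> e i j ->
                        #|[set k | e i k && e j k]| = l
    & exists m : nat, forall i j, i != j -> ~~ e i j ->
                        #|[set k | e i k && e j k]| = m].

(* Main.v *)
Require Import Defs.
From HB Require Import structures.
From mathcomp Require Import all_boot all_order all_algebra ring lra.
Import Order.TTheory GRing.Theory Num.Theory.
Set Implicit Arguments. Unset Strict Implicit. Unset Printing Implicit Defensive.
Local Open Scope ring_scope.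

Lemma dotvE (R : comRingType) n (u v : 'rV[R]_n) : dotv u v = \sum_k u 0 k * v 0 k.
Proof. rewrite /dotv mxE; apply: eq_bigr => k _; rewrite mxE. by []. Qed.

Lemma dotvC (R : comRingType) n (u v : 'rV[R]_n) : dotv u v = dotv v u.
Proof. rewrite !dotvE; apply: eq_bigr => k _; exact: mulrC. Qed.

Lemma dotvDl (R : comRingType) n (u v w : 'rV[R]_n) : dotv (u + v) w = dotv u w + dotv v w.
Proof. rewrite !dotvE -big_split; apply: eq_bigr => k _; by rewrite mxE mulrDl. Qed.

Lemma dotvDr (R : comRingType) n (u v w : 'rV[R]_n) : dotv w (u + v) = dotv w u + dotv w v.
Proof. by rewrite dotvC dotvDl !(dotvC w). Qed.

Lemma polar (R : numFieldType) n N (x : 'I_N -> 'rV[R]_n) c :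
  (forall v, \sum_(i < N) (dotv v (x i)) ^+ 2 = c * dotv v v) ->
  forall u v, \sum_(i < N) dotv u (x i) * dotv v (x i) = c * dotv u v.
Proof.
move=> H u v.
have E : \sum_(i < N) (dotv (u + v) (x i)) ^+ 2 =
   \sum_(i < N) (dotv u (x i)) ^+ 2 + \sum_(i < N) (dotv v (x i)) ^+ 2 +
   2 * \sum_(i < N) dotv u (x i) * dotv v (x i).
  rewrite mulr_sumr -!big_split /=; apply: eq_bigr => i _; rewrite dotvDl; ring.
have h2 : (2 : R) != 0 by rewrite pnatr_eq0.
rewrite !H dotvDl !dotvDr (dotvC v u) in E.
apply: (mulfI h2); apply: (addrI (c * dotv u u + c * dotv v v)).
rewrite -E; ring.
Qed.

Lemma sum_delta (R : ringType) N (F : 'I_N -> R) i :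
  \sum_(l < N) (l == i)%:R * F l = F i.
Proof.
rewrite (bigD1 i) //= eqxx mul1r big1 ?addr0 // => l /negbTE ->; by rewrite mul0r.
Qed.

Lemma sum_deltar (R : ringType) N (F : 'I_N -> R) i :
  \sum_(l < N) F l * (l == i)%:R = F i.
Proof.
rewrite (bigD1 i) //= eqxx mulr1 big1 ?addr0 // => l /negbTE ->; by rewrite mulr0.
Qed.

Lemma sum_delta1 (R : ringType) N (i : 'I_N) :
  \sum_(l < N) (l == i)%:R = 1 :> R.
Proof. rewrite -[RHS](sum_delta (fun _ => 1) i); apply: eq_bigr => l _; by rewrite mulr1. Qed.

Lemma sumB (R : ringType) N (P : pred 'I_N) :
  \sum_(l < N) (P l)%:R = #|[set l | P l]|%:R :> R.
Proof.
rewrite -natr_sum; congr (_%:R); rewrite -sum1_card big_mkcond /=.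
rewrite [RHS]big_mkcond; apply: eq_bigr => l _; rewrite inE; by case: (P l).
Qed.

Lemma srg_a (R : realFieldType) n N (x : 'I_N -> 'rV[R]_n) (a b : R) :
  two_distance_tight_frame x a b -> a ^+ 2 != b ^+ 2 -> strongly_regular (ip_graph x a).
Proof.
case=> _ H1 Hab H2 Hfr Hab2.
set c := N%:R / n%:R in Hfr.
set A := ip_graph x a.
have Hpol := polar Hfr.
have Hba : b != a by rewrite eq_sym.
have gE : forall i l, dotv (x i) (x l) = b + (1-b) * (l == i)%:R + (a-b) * (A i l)%:R.
  move=> i l; rewrite /A /ip_graph; have [->|nil] := eqVneq l i.
    rewrite /= H1; ring.
  have nil' : i != l by rewrite eq_sym.
  rewrite /=.
  case: (H2 i l nil') => ->; rewrite ?eqxx ?(negbTE Hba) /=; ring.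
have Asym : forall i j, A i j = A j i.
  by move=> i j; rewrite /A /ip_graph eq_sym dotvC.
have Airr : forall i, A i i = false by move=> i; rewrite /A /ip_graph eqxx.
have key : forall i j, c * dotv (x i) (x j) =
   b^+2 * N%:R + 2*b*(1-b) + b*(a-b)*(#|[set l | A i l]|%:R + #|[set l | A j l]|%:R)
   + (1-b)^+2 * (i == j)%:R + 2*(1-b)*(a-b)*(A i j)%:R
   + (a-b)^+2 * #|[set l | A i l && A j l]|%:R.
  move=> i j; rewrite -Hpol.
  rewrite (eq_bigr (fun l => b^+2 + b*(1-b)*(l==j)%:R + b*(a-b)*(A j l)%:R
     + (1-b)*b*(l==i)%:R + (1-b)^+2 * ((l==i)%:R * (l==j)%:R)
     + (1-b)*(a-b)*((l==i)%:R*(A j l)%:R) + (a-b)*b*(A i l)%:R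
     + (a-b)*(1-b)*((A i l)%:R*(l==j)%:R) + (a-b)^+2*((A i l && A j l)%:R))); last first.
    move=> l _; rewrite !gE.
    have -> : ((A i l && A j l)%:R : R) = (A i l)%:R * (A j l)%:R.
      by case: (A i l); case: (A j l); rewrite /= ?(mul1r, mulr1, mul0r, mulr0).
    ring.
  rewrite !big_split /= sumr_const card_ord -!mulr_sumr.
  rewrite !sum_delta sum_deltar !sum_delta1 (Asym j i) !sumB -mulr_natr; ring.
have cmii : forall i, #|[set l | A i l && A i l]| = #|[set l | A i l]|.
  by move=> i; apply: eq_card => l; rewrite !inE andbb.
have Hab2' : a^+2 - b^+2 != 0 by rewrite subr_eq0.
have degF : forall i, (a^+2 - b^+2) * #|[set l | A i l]|%:R =
    c - b^+2 * N%:R - 2*b*(1-b) - (1-b)^+2.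
  move=> i; have := key i i; rewrite H1 eqxx Airr cmii mulr1 => E; rewrite E /=; ring.
have Hdeg : forall i j, #|[set l | A i l]| = #|[set l | A j l]|.
  move=> i j; apply/eqP; rewrite -(eqr_nat R); apply/eqP.
  by apply: (mulfI Hab2'); rewrite !degF.
have Hab1 : (a - b)^+2 != 0 by rewrite expf_neq0 // subr_eq0.
have cmF : forall i j, i != j -> (a-b)^+2 * #|[set l | A i l && A j l]|%:R =
   c * dotv (x i) (x j) - b^+2 * N%:R - 2*b*(1-b)
   - b*(a-b)*(#|[set l | A i l]|%:R + #|[set l | A j l]|%:R)
   - 2*(1-b)*(a-b)*(A i j)%:R.
  move=> i j ij; rewrite key (negbTE ij) /=; ring.
have cmeq : forall i j i' j', i != j -> i' != j' -> A i j = A i' j' ->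
    #|[set l | A i l && A j l]| = #|[set l | A i' l && A j' l]|.
  move=> i j i' j' ij ij' AA; apply/eqP; rewrite -(eqr_nat R); apply/eqP.
  apply: (mulfI Hab1); rewrite !cmF // !gE AA.
  rewrite eq_sym (negbTE ij) [j' == i']eq_sym (negbTE ij').
  by rewrite !(Hdeg _ i).
split.
- case: (pickP (fun _ : 'I_N => true)) => [i0 _|h].
    by exists #|[set l | A i0 l]| => i; apply: Hdeg.
  by exists 0%N => i; have := h i.
- case: (pickP (fun p : 'I_N * 'I_N => (p.1 != p.2) && A p.1 p.2))
    => [[i0 j0] /= /andP[ij0 A0] | h].
    exists #|[set l | A i0 l && A j0 l]| => i j ij Aij.
    by apply: cmeq => //; rewrite Aij A0.
  by exists 0%N => i j ij Aij; have := h (i, j); rewrite /= ij Aij.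
- case: (pickP (fun p : 'I_N * 'I_N => (p.1 != p.2) && ~~ A p.1 p.2))
    => [[i0 j0] /= /andP[ij0 A0] | h].
    exists #|[set l | A i0 l && A j0 l]| => i j ij Aij.
    by apply: cmeq => //; rewrite (negbTE Aij) (negbTE A0).
  by exists 0%N => i j ij Aij; have := h (i, j); rewrite /= ij Aij.
Qed.

Theorem proposition3p2 (R : realFieldType) (n N : nat)
    (x : 'I_N -> 'rV[R]_n) (a b : R) :
  two_distance_tight_frame x a b ->
  a ^+ 2 != b ^+ 2 ->
  strongly_regular (ip_graph x a) /\ strongly_regular (ip_graph x b).
Proof.
move=> H Hab2; split; first exact: srg_a H Hab2.
case: H => Hinj H1 Hab H2 Hfr.
apply: (srg_a (a := b) (b := a)); last by rewrite eq_sym.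
split => //; first by rewrite eq_sym.
by move=> i j ij; case: (H2 i j ij); [right|left].
Qed.
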